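(* Every maximal non-PCG is a $2$-AND-PCG.
   Context: All trees are unrooted with edges weighted by nonnegative reals; $d_T(u,v)$ is the weight of the path between leaves $u,v$ of $T$. A graph $H$ is a PCG if there exist a tree $T$ with leaf set $V(H)$ and an interval $I$ of nonnegative reals such that $\{u,v\}\in E(H)$ iff $d_T(u,v)\in I$. A graph $G$ is a maximal non-PCG if $G$ is not a PCG but adding any single edge (between two non-adjacent vertices of $G$) yields a PCG. A graph $G=(V,E)$ is a $k$-AND-PCG if there exist $k$ PCGs $G_1,\ldots,G_k$ on vertex set $V$ with $E=\bigcap_i E(G_i)$. *)

(* Defs.v *)
From Stdlib Require Import Reals.
From mathcomp Require Import all_boot.
Set Implicit Arguments. Unset Strict Implicit. Unset Printing Implicit Defensive.

Definition simple_graph (V : finType) (e : rel V) : Prop :=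
  (forall u v, e u v = e v u) /\ (forall u, e u u = false).

Definition simple_path (N : finType) (adj : rel N) (x y : N) (p : seq N) : bool :=
  [&& path adj x p, last x p == y & uniq (x :: p)].

Definition is_tree (N : finType) (adj : rel N) : Prop :=
  simple_graph adj /\
  (forall x y : N, exists p, simple_path adj x y p) /\
  (forall (x y : N) p q, simple_path adj x y p -> simple_path adj x y q -> p = q).

Definition degree (N : finType) (adj : rel N) (x : N) : nat := #|[pred y | adj x y]|.

Fixpoint walk_weight (N : Type) (w : N -> N -> R) (x : N) (p : seq N) : R :=
  match p with
  | [::] => R0
  | y :: p' => Rplus (w x y) (walk_weight w y p')
  end.

Definition tree_dist (N : finType) (adj : rel N) (w : N -> N -> R) (x y : N) (r : R) : Prop :=
  exists p, simple_path adj x y p /\ walk_weight w x p = r.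

(** A weighted tree with leaf set V is given by
    a node type N, adjacency adj, edge weights w (nonnegative, symmetric on
    edges), and an injection leaf : V -> N whose image is exactly the set of
    leaves (nodes of degree <= 1) of the tree. *)
Definition is_PCG (V : finType) (e : rel V) : Prop :=
  exists (N : finType) (adj : rel N) (w : N -> N -> R) (leaf : V -> N) (dmin dmax : R),
    is_tree adj /\
    (forall x y, adj x y -> Rle R0 (w x y) /\ w x y = w y x) /\
    injective leaf /\
    (forall x : N, (degree adj x <= 1)%N <-> exists v, leaf v = x) /\
    Rle R0 dmin /\ Rle dmin dmax /\
    (forall u v : V, u != v ->
       (e u v <-> exists r, tree_dist adj w (leaf u) (leaf v) r /\ Rle dmin r /\ Rle r dmax)).

Definition add_edge (V : finType) (e : rel V) (u v : V) : rel V :=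
  [rel x y | [|| e x y, (x == u) && (y == v) | (x == v) && (y == u)]].

Definition maximal_nonPCG (V : finType) (e : rel V) : Prop :=
  simple_graph e /\ ~ is_PCG e /\
  (forall u v : V, u != v -> ~~ e u v -> is_PCG (add_edge e u v)).

Definition k_AND_PCG (k : nat) (V : finType) (e : rel V) : Prop :=
  exists G : 'I_k -> rel V,
    (forall i, simple_graph (G i) /\ is_PCG (G i)) /\
    (forall u v : V, e u v = [forall i, G i u v]).

(* Main.v *)
Require Import Defs.
From Stdlib Require Import Reals Lra Classical.
From mathcomp Require Import all_boot.
Set Implicit Arguments. Unset Strict Implicit. Unset Printing Implicit Defensive.

Section Small.
Variable V : finType.

Lemma small_PCG (e : rel V) : (#|V| <= 1)%N -> is_PCG e.
Proof.
move=> /card_le1_eqP H.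
have Heq : forall x y : V, x = y by move=> x y; apply: H.
exists V, [rel x y | false], (fun _ _ => R0), id, R0, R0.
split; last split; last split; last split; last split; last split.
- split; first split => //.
  split; first by move=> x y; exists [::]; rewrite /simple_path /= (Heq x y) eqxx.
  move=> x y [|p ps] [|q qs] //; rewrite /simple_path /=.
- by [].
- by [].
- move=> x; split => _; last by rewrite /degree eq_card0.
  by exists x.
- lra.
- lra.
- by move=> u v; rewrite (Heq u v) eqxx.
Qed.
End Small.

Section Star.
Variable V : finType.
Variable f : V -> R.

Definition sadj : rel (option V) := [rel x y | (x == None) != (y == None)].
Definition sw (x y : option V) : R :=
  match x, y with Some a, None => f a | None, Some b => f b | _, _ => R0 end.
Definition canon (x y : option V) : seq (option V) :=
  if x == y then [::] else if (x != None) && (y != None) then [:: None; y] else [:: y].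

Lemma canon_path x y : simple_path sadj x y (canon x y).
Proof.
rewrite /canon /simple_path.
case: x => [x|]; case: y => [y|] //=; last by rewrite eqxx.
case: (eqVneq (Some x) (Some y)) => [->|Hne] /=; first by rewrite eqxx.
by rewrite /= !inE !eqxx negb_or Hne.
Qed.

Lemma canon_uniq x y p : simple_path sadj x y p -> p = canon x y.
Proof.
rewrite /simple_path /canon => /and3P [Hp /eqP <- Hu].
case: p Hp Hu => [|z1 [|z2 [|z3 p]]] /=.
- by rewrite eqxx.
- rewrite !inE andbT => H1 /andP [H2 _]; rewrite (negbTE H2).
  by move: H1 {H2}; case: x => [x|]; case: z1 => [z|].
- move=> /andP [H1 /andP [H2 _]] /andP [H3 /andP [H4 _]].
  rewrite !inE in H3 H4.
  move: H1 H2 H3 H4; case: x => [x|]; case: z1 => [z|]; case: z2 => [t|] //=.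
  by move=> _ _ H _; rewrite (negbTE H).
- move=> /and4P [H1 H2 H3 _] /and5P [H4 H5 _ _ _].
  rewrite !inE in H4 H5.
  move: H1 H2 H3 H4 H5; case: x => [x|]; case: z1 => [z|]; case: z2 => [t|]; case: z3 => [s|] //=;
    rewrite ?negb_or ?eqxx ?andbF //.
Qed.

Lemma star_PCG (e : rel V) : (2 <= #|V|)%N -> (forall x, Rle R0 (f x)) ->
  (forall u v, u != v -> (e u v <-> Rle (Rplus (f u) (f v)) R1)) -> is_PCG e.
Proof.
move=> HV Hf He.
exists (option V : finType), sadj, sw, Some, R0, R1.
split; last split; last split; last split; last split; last split.
- split; first split.
  + by move=> x y; rewrite /sadj /= eq_sym.
  + by move=> x; rewrite /sadj /= eqxx.
  split; first by move=> x y; exists (canon x y); apply: canon_path.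
  by move=> x y p q /canon_uniq -> /canon_uniq ->.
- move=> [x|] [y|] //= _; split; auto; lra.
- exact: Some_inj.
- move=> [x|]; rewrite /degree.
  + have -> : #|[pred y | sadj (Some x) y]| = 1%N.
      rewrite -(card1 (None : option V)); apply: eq_card => z.
      by case: z => [z|].
    by split => // _; exists x.
  + have -> : #|[pred y | sadj None y]| = #|V|.
      transitivity (#|{: option V}|.-1); last by rewrite card_option.
      rewrite -(cardC1 (None : option V)).
      apply: eq_card => z; by case: z => [z|].
    split; first by rewrite leqNgt HV.
    by case.
- lra.
- lra.
- move=> u v Huv; rewrite He //.
  have Hne : (Some u == Some v) = false by apply/negbTE.
  split.
  + move=> H; exists (Rplus (f u) (f v)); split; last (split; [|exact H]).
    * exists [:: None; Some v]; split.
        by have := canon_path (Some u) (Some v); rewrite /canon Hne.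
      simpl; lra.
    * have := Hf u; have := Hf v; lra.
  + move=> [r [[p [Hp Hw]] [_ Hr]]].
    move: Hp => /canon_uniq; rewrite /canon.
    rewrite Hne /= => Hpe; subst p; simpl in Hw; lra.
Qed.

End Star.

Lemma PCG_of_f (V : finType) (e : rel V) (f : V -> R) : (forall x, Rle R0 (f x)) ->
  (forall u v, u != v -> (e u v <-> Rle (Rplus (f u) (f v)) R1)) -> is_PCG e.
Proof.
move=> Hf He; case: (leqP #|V| 1) => HV; first exact: small_PCG.
exact: (star_PCG HV Hf He).
Qed.

Lemma add_edge_simple (V : finType) (e : rel V) a b :
  simple_graph e -> a != b -> simple_graph (add_edge e a b).
Proof.
move=> [Hs Hi] Hab; split => [x y|x]; rewrite /add_edge /=.
- by rewrite Hs; case: (x == a); case: (x == b); case: (y == a); case: (y == b); rewrite /= ?orbT ?orbF ?andbT ?andbF.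
- rewrite Hi /=; apply/negbTE/negP => /orP [] /andP [/eqP -> /eqP Hx];
   by rewrite Hx eqxx in Hab.
Qed.

Theorem theorem11 (V : finType) (e : rel V) :
  maximal_nonPCG e -> k_AND_PCG 2 e.
Proof.
move=> [[Hsym Hirr] [HnP Hmax]].
case: (classic (exists a b, a != b /\ ~~ e a b)) => [[a [b [Hab Heab]]] | Hno]; last first.
  exfalso; apply: HnP; apply: (PCG_of_f (f := fun _ => R0)) => [x|u v Huv]; first lra.
  split => _; last first.
    apply/negPn/negP => H; apply: Hno; by exists u, v.
  lra.
case: (classic (exists c d, c != d /\ ~~ e c d /\
   ~~ ((c == a) && (d == b) || (c == b) && (d == a)))) => [[c [d [Hcd [Hecd Hn]]]] | Hno2].
- exists (fun i : 'I_2 => if val i == 0%N then add_edge e a b else add_edge e c d).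
  split.
    move=> i; case: (val i == 0%N); split; try apply: add_edge_simple => //; by apply: Hmax.
  move=> u v; apply/idP/forallP.
    by move=> H i; case: ifP => _; rewrite /add_edge /= H.
  move=> H; have H0 := H ord0; have H1 := H (Ordinal (isT : (1 < 2)%N)); simpl in H0, H1.
  case E: (e u v) => //; exfalso.
  rewrite /add_edge /= E /= in H0 H1.
  move/orP: H0 => [] /andP [/eqP ? /eqP ?]; move/orP: H1 => [] /andP [/eqP ? /eqP ?]; subst;
    by rewrite ?eqxx ?orbT in Hn.
- exfalso; apply: HnP.
  apply: (PCG_of_f (f := fun x => if (x == a) || (x == b) then R1 else R0)) => [x|u v Huv].
    case: ifP => _; lra.
  case Hpair: ((u == a) && (v == b) || (u == b) && (v == a)).
    have -> : e u v = false.
      move/orP: Hpair => [] /andP [/eqP -> /eqP ->]; apply/negbTE => //.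
      by rewrite Hsym.
    move/orP: Hpair => [] /andP [/eqP -> /eqP ->]; rewrite !eqxx ?orbT /=;
      split => // H; lra.
  have Heuv : e u v.
    apply/negPn/negP => H; apply: Hno2; exists u, v; split => //; split => //.
    by rewrite Hpair.
  have Hnb : ~~ (((u == a) || (u == b)) && ((v == a) || (v == b))).
    apply/negP => /andP [/orP [/eqP Hu|/eqP Hu] /orP [/eqP Hv|/eqP Hv]]; subst;
      by rewrite ?eqxx ?orbT in Huv Hpair.
  split => // _.
  move: Hnb; case: ((u == a) || (u == b)); case: ((v == a) || (v == b)) => //= _; lra.
Qed.
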